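(* Consider the two-route traffic model with affine routing ratios described in the context, and let $\overline{x}$ be its unique equilibrium. Define, for $i=1,2$, the effective capacities $\tilde F_i=\frac{q_i+\sqrt{q_i^2+k_i}}{2\alpha}$, where $q_1=\alpha\big(F_1(1+\tfrac{E_2}{E_1})-E_2\big)-2(1-\alpha)r_1^0E_2$, $q_2=\alpha\big(F_2(1+\tfrac{E_1}{E_2})-E_1\big)-2(1-\alpha)r_2^0E_1$, $k_1=8\alpha F_1E_2$, $k_2=8\alpha F_2E_1$. Then: (i) if $\phi\le\min\{\tilde F_1,\tilde F_2\}$, the network has no unsatisfied demand at $\overline{x}$, i.e., $\phi R_\ell(\overline{x})\le S_\ell(\overline{x}_\ell)$ for $\ell=1,2$; (ii) if $\phi>\min\{\tilde F_1,\tilde F_2\}=\tilde F_i$, then there is unsatisfied demand on route $i$ at $\overline{x}$, i.e., $\phi R_i(\overline{x})>S_i(\overline{x}_i)$.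
   Context: Two routes $i=1,2$ connect an origin to a destination, with positive parameters $B_i$ (jam density), $C_i$ (critical density), $F_i$ (capacity), $C_i<B_i$, and constant demand $\phi>0$. Set $v_i=F_i/C_i$ and $E_i=v_iB_i$. The state $x=(x_1,x_2)\in\Omega:=[0,B_1]\times[0,B_2]$ evolves by $\dot x_i=\min\{\phi R_i(x),S_i(x_i)\}-D_i(x_i)$, with $S_i(x_i)=F_i$ if $x_i<C_i$, $S_i(x_i)=\frac{F_i}{B_i-C_i}(B_i-x_i)$ otherwise; $D_i(x_i)=v_ix_i$ if $x_i<C_i$, $D_i(x_i)=F_i$ otherwise. The routing ratios are affine: with $\alpha\in(0,1]$ and constants $r_1^0,r_2^0\ge0$, $r_1^0+r_2^0=1$, $R_1(x)=(1-\alpha)r_1^0+\alpha\big(\tfrac12+\tfrac12(\tfrac{x_2}{B_2}-\tfrac{x_1}{B_1})\big)$, $R_2(x)=(1-\alpha)r_2^0+\alpha\big(\tfrac12+\tfrac12(\tfrac{x_1}{B_1}-\tfrac{x_2}{B_2})\big)$. Standing assumptions: $\phi<F_1+F_2$; $F_i>(1-\alpha)\phi r_i^0$ for $i=1,2$; $\phi<E_i$ for $i=1,2$. Under these assumptions the system has a unique equilibrium $\overline{x}\in\Omega$. Demand on route $i$ at state $x$ is called unsatisfied if $\phi R_i(x)>S_i(x_i)$. *)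

(* Defs.v *)
From Stdlib Require Import Reals Lra.
Open Scope R_scope.

(* Supply function of a route with jam density B, critical density C, capacity F. *)
Definition supply (B C F x : R) : R :=
  if Rlt_dec x C then F else F / (B - C) * (B - x).

(* Demand (outflow) function of a route; v = F / C. *)
Definition demand (C F x : R) : R :=
  if Rlt_dec x C then (F / C) * x else F.

Definition route_ratio1 (alpha r10 B1 B2 x1 x2 : R) : R :=
  (1 - alpha) * r10 + alpha * (1/2 + 1/2 * (x2 / B2 - x1 / B1)).
Definition route_ratio2 (alpha r20 B1 B2 x1 x2 : R) : R :=
  (1 - alpha) * r20 + alpha * (1/2 + 1/2 * (x1 / B1 - x2 / B2)).

(* Vector field of the dynamics  xdot_i = min{phi R_i(x), S_i(x_i)} - D_i(x_i). *)
Definition field1 (B1 B2 C1 F1 phi alpha r10 x1 x2 : R) : R :=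
  Rmin (phi * route_ratio1 alpha r10 B1 B2 x1 x2) (supply B1 C1 F1 x1) - demand C1 F1 x1.
Definition field2 (B1 B2 C2 F2 phi alpha r20 x1 x2 : R) : R :=
  Rmin (phi * route_ratio2 alpha r20 B1 B2 x1 x2) (supply B2 C2 F2 x2) - demand C2 F2 x2.

Definition is_equilibrium (B1 B2 C1 C2 F1 F2 phi alpha r10 r20 x1 x2 : R) : Prop :=
  0 <= x1 <= B1 /\ 0 <= x2 <= B2 /\
  field1 B1 B2 C1 F1 phi alpha r10 x1 x2 = 0 /\
  field2 B1 B2 C2 F2 phi alpha r20 x1 x2 = 0.

Definition Ftilde (alpha q k : R) : R := (q + sqrt (q ^ 2 + k)) / (2 * alpha).

(* For route 1: own (F,r0,E) = (F1,r10,E1), other E = E2; symmetric for route 2. *)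
Definition q_eff (alpha F r0 Eown Eoth : R) : R :=
  alpha * (F * (1 + Eoth / Eown) - Eoth) - 2 * (1 - alpha) * r0 * Eoth.
Definition k_eff (alpha F Eoth : R) : R := 8 * alpha * F * Eoth.

(* Main.v *)
Require Import Defs.
From Stdlib Require Import Reals.
From Stdlib Require Import Lra Psatz.
Open Scope R_scope.

Lemma ft_iff (al q k phi : R) : 0 < al -> 0 < k -> 0 < phi ->
  (phi <= Ftilde al q k <-> 4*al*(al*phi^2 - q*phi) - k <= 0).
Proof.
  intros Ha Hk Hp. unfold Ftilde.
  assert (Hs0 : 0 <= q^2 + k) by nra.
  pose proof (sqrt_sqrt _ Hs0) as Hss. pose proof (sqrt_pos (q^2+k)) as Hsp.
  set (s := sqrt (q^2+k)) in *.
  assert (Hsq : q < s) by nra.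
  assert (E : 4*al*(al*phi^2 - q*phi) - k = (2*al*phi - q - s)*(2*al*phi - q + s)) by nra.
  rewrite E. split; intro H.
  - assert (2*al*phi <= q + s).
    { apply Rmult_le_reg_r with (/(2*al)). apply Rinv_0_lt_compat; lra.
      replace (2*al*phi*/(2*al)) with phi by (field; lra). exact H. }
    assert (0 < 2*al*phi - q + s) by nra.
    assert (0 <= (q + s - 2*al*phi)*(2*al*phi - q + s)) by (apply Rmult_le_pos; lra). lra.
  - assert (0 < 2*al*phi - q + s) by nra.
    assert (2*al*phi <= q + s).
    { destruct (Rle_dec (2*al*phi) (q+s)); auto.
      assert (0 < (2*al*phi - q - s)*(2*al*phi - q + s)) by (apply Rmult_lt_0_compat; lra). lra. }
    apply Rmult_le_reg_r with (2*al). lra.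
    replace ((q + s) / (2 * al) * (2 * al)) with (q+s) by (field; lra). lra.
Qed.

Lemma route_eq (B C F phi rho x : R) : 0 < C -> C < B -> 0 < F -> 0 <= x <= B ->
  Rmin (phi*rho) (supply B C F x) - demand C F x = 0 ->
  supply B C F x = F /\ F/C*x = Rmin (phi*rho) F.
Proof.
  intros HC HCB HF Hx H. unfold supply, demand in *.
  destruct (Rlt_dec x C) as [Hl|Hl].
  - split; lra.
  - set (k := F/(B-C)) in *.
    assert (Hk : 0 < k) by (unfold k; apply Rdiv_lt_0_compat; lra).
    assert (HkF : k*(B-C) = F) by (unfold k; field; lra).
    pose proof (Rmin_r (phi*rho) (k*(B-x))).
    assert (k*(B-x) = F) by nra.
    assert (x = C) by nra. subst x.
    split. lra. rewrite HkF in H. replace (F/C*C) with F by (field; lra). lra.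
Qed.

Lemma core (al r1 phi F1 F2 E1 E2 w1 w2 : R) :
 0 < al -> 0 < phi -> 0 < F1 -> 0 < F2 -> 0 < E1 -> 0 < E2 -> phi < F1 + F2 ->
 let R1 := (1-al)*r1 + al*(1/2 + 1/2*(w2/E2 - w1/E1)) in
 w1 = Rmin (phi*R1) F1 -> w2 = Rmin (phi*(1-R1)) F2 ->
 let P1 := 4*al*(al*phi^2 - q_eff al F1 r1 E1 E2 * phi) - k_eff al F1 E2 in
 let P2 := 4*al*(al*phi^2 - q_eff al F2 (1-r1) E2 E1 * phi) - k_eff al F2 E1 in
 (P1 <= 0 -> P2 <= 0 -> phi*R1 <= F1 /\ phi*(1-R1) <= F2) /\
 (P1 > 0 -> phi*R1 > F1) /\ (P2 > 0 -> phi*(1-R1) > F2).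
Proof.
  intros Ha Hp HF1 HF2 HE1 HE2 Hcap R1 Hw1 Hw2 P1 P2.
  assert (G1 : E1*P1 = 4*al*(2*E1*E2*(phi*R1-F1) + al*E1*phi*(phi-F1-w2) + al*E2*phi*(w1-F1))).
  { unfold P1, R1, q_eff, k_eff. field. lra. }
  assert (G2 : E2*P2 = 4*al*(2*E1*E2*(phi*(1-R1)-F2) + al*E2*phi*(phi-F2-w1) + al*E1*phi*(w2-F2))).
  { unfold P2, R1, q_eff, k_eff. field. lra. }
  clearbody R1 P1 P2.
  set (z1 := phi*R1) in *.
  assert (Hz2 : phi*(1-R1) = phi - z1) by (unfold z1; ring).
  rewrite Hz2 in *.
  assert (HE12 : 0 < E1*E2) by nra.
  assert (Hae1 : 0 < al*E1*phi) by (repeat apply Rmult_lt_0_compat; lra).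
  assert (Hae2 : 0 < al*E2*phi) by (repeat apply Rmult_lt_0_compat; lra).
  destruct (Rle_dec z1 F1) as [h1|h1];
  [rewrite Rmin_left in Hw1 by lra | rewrite Rmin_right in Hw1 by lra];
  (destruct (Rle_dec (phi - z1) F2) as [h2|h2];
  [rewrite Rmin_left in Hw2 by lra | rewrite Rmin_right in Hw2 by lra]); subst w1 w2.
  -
    set (D := 2*E1*E2 + al*E1*phi + al*E2*phi).
    assert (HD : 0 < D) by (unfold D; lra).
    assert (G1' : E1*P1 = (4*al*D)*(z1-F1)) by (rewrite G1; unfold D; ring).
    assert (G2' : E2*P2 = (4*al*D)*(phi-z1-F2)) by (rewrite G2; unfold D; ring).
    assert (H4 : 0 < 4*al*D) by (apply Rmult_lt_0_compat; lra).
    split; [intros; split; lra|split; intros HP].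
    + assert (0 < E1*P1) by (apply Rmult_lt_0_compat; lra).
      destruct (Rle_dec (z1) F1); [|lra].
      assert ((4*al*D)*(F1 - z1) >= 0) by (apply Rle_ge, Rmult_le_pos; lra).
      assert ((4*al*D)*(F1 - z1) = -((4*al*D)*(z1-F1))) by ring. lra.
    + assert (0 < E2*P2) by (apply Rmult_lt_0_compat; lra).
      assert ((4*al*D)*(F2 - (phi - z1)) >= 0) by (apply Rle_ge, Rmult_le_pos; lra).
      assert ((4*al*D)*(F2 - (phi - z1)) = -((4*al*D)*(phi-z1-F2))) by ring. lra.
  -
    set (D := 2*E1*E2 + al*E2*phi).
    assert (HD : 0 < D) by (unfold D; lra).
    assert (G2' : E2*P2 = (4*al*D)*(phi-z1-F2)) by (rewrite G2; unfold D; ring).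
    assert (H4 : 0 < 4*al*D) by (apply Rmult_lt_0_compat; lra).
    assert (HP1 : E1*P1 < 0).
    { rewrite G1.
      assert (0 <= 2*E1*E2*(F1 - z1)) by (apply Rmult_le_pos; lra).
      assert (0 < al*E1*phi*(F1+F2-phi)) by (apply Rmult_lt_0_compat; lra).
      assert (0 <= al*E2*phi*(F1-z1)) by (apply Rmult_le_pos; lra).
      assert (0 < 4*al) by lra.
      assert (0 < 4*al*(2*E1*E2*(F1 - z1) + al*E1*phi*(F1+F2-phi) + al*E2*phi*(F1-z1)))
        by (apply Rmult_lt_0_compat; lra). lra. }
    split; [intros HP1' HP2'|split; intros HP].
    +       assert (0 <= -(E2*P2)).
      { replace (-(E2*P2)) with (E2*(-P2)) by ring. apply Rmult_le_pos; lra. }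
      assert ((4*al*D)*(phi - z1 - F2) > 0) by (apply Rmult_lt_0_compat; lra). lra.
    + assert (0 < E1*P1) by (apply Rmult_lt_0_compat; lra). lra.
    + lra.
  -
    set (D := 2*E1*E2 + al*E1*phi).
    assert (HD : 0 < D) by (unfold D; lra).
    assert (G1' : E1*P1 = (4*al*D)*(z1-F1)) by (rewrite G1; unfold D; ring).
    assert (H4 : 0 < 4*al*D) by (apply Rmult_lt_0_compat; lra).
    assert (HP2 : E2*P2 < 0).
    { rewrite G2.
      assert (0 <= 2*E1*E2*(F2 - (phi - z1))) by (apply Rmult_le_pos; lra).
      assert (0 < al*E2*phi*(F1+F2-phi)) by (apply Rmult_lt_0_compat; lra).
      assert (0 <= al*E1*phi*(F2-(phi - z1))) by (apply Rmult_le_pos; lra).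
      assert (0 < 4*al) by lra.
      assert (0 < 4*al*(2*E1*E2*(F2 - (phi - z1)) + al*E2*phi*(F1+F2-phi) + al*E1*phi*(F2-(phi - z1))))
        by (apply Rmult_lt_0_compat; lra). lra. }
    split; [intros HP1' HP2'|split; intros HP].
    + assert (0 <= -(E1*P1)).
      { replace (-(E1*P1)) with (E1*(-P1)) by ring. apply Rmult_le_pos; lra. }
      assert ((4*al*D)*(z1 - F1) > 0) by (apply Rmult_lt_0_compat; lra). lra.
    + lra.
    + assert (0 < E2*P2) by (apply Rmult_lt_0_compat; lra). lra.
  - lra.
Qed.
Theorem proposition2
  (B1 B2 C1 C2 F1 F2 phi alpha r10 r20 x1 x2 : R)
  (hB1 : 0 < B1) (hB2 : 0 < B2) (hC1 : 0 < C1) (hC2 : 0 < C2)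
  (hF1 : 0 < F1) (hF2 : 0 < F2) (hphi : 0 < phi)
  (hCB1 : C1 < B1) (hCB2 : C2 < B2)
  (halpha : 0 < alpha <= 1)
  (hr10 : 0 <= r10) (hr20 : 0 <= r20) (hr : r10 + r20 = 1)
  (hcap : phi < F1 + F2)
  (hF1r : F1 > (1 - alpha) * phi * r10) (hF2r : F2 > (1 - alpha) * phi * r20)
  (hE1 : phi < (F1 / C1) * B1) (hE2 : phi < (F2 / C2) * B2)
  (heq : is_equilibrium B1 B2 C1 C2 F1 F2 phi alpha r10 r20 x1 x2) :
  let E1 := (F1 / C1) * B1 in
  let E2 := (F2 / C2) * B2 in
  let Ft1 := Ftilde alpha (q_eff alpha F1 r10 E1 E2) (k_eff alpha F1 E2) in
  let Ft2 := Ftilde alpha (q_eff alpha F2 r20 E2 E1) (k_eff alpha F2 E1) in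
  (phi <= Rmin Ft1 Ft2 ->
     phi * route_ratio1 alpha r10 B1 B2 x1 x2 <= supply B1 C1 F1 x1 /\
     phi * route_ratio2 alpha r20 B1 B2 x1 x2 <= supply B2 C2 F2 x2) /\
  (phi > Rmin Ft1 Ft2 -> Rmin Ft1 Ft2 = Ft1 ->
     phi * route_ratio1 alpha r10 B1 B2 x1 x2 > supply B1 C1 F1 x1) /\
  (phi > Rmin Ft1 Ft2 -> Rmin Ft1 Ft2 = Ft2 ->
     phi * route_ratio2 alpha r20 B1 B2 x1 x2 > supply B2 C2 F2 x2).
Proof.
  intros E1 E2 Ft1 Ft2.
  destruct heq as (Hx1 & Hx2 & Hf1 & Hf2).
  unfold field1 in Hf1. unfold field2 in Hf2.
  apply route_eq in Hf1; try lra. apply route_eq in Hf2; try lra.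
  destruct Hf1 as [S1 W1]. destruct Hf2 as [S2 W2].
  rewrite S1, S2.
  assert (HE1 : 0 < E1) by (unfold E1; apply Rmult_lt_0_compat; [apply Rdiv_lt_0_compat|]; lra).
  assert (HE2 : 0 < E2) by (unfold E2; apply Rmult_lt_0_compat; [apply Rdiv_lt_0_compat|]; lra).
  set (w1 := F1/C1*x1) in *. set (w2 := F2/C2*x2) in *.
  assert (RR1 : route_ratio1 alpha r10 B1 B2 x1 x2 =
     (1-alpha)*r10 + alpha*(1/2 + 1/2*(w2/E2 - w1/E1))).
  { unfold route_ratio1, w1, w2, E1, E2. field. lra. }
  assert (RR2 : route_ratio2 alpha r20 B1 B2 x1 x2 =
     1 - ((1-alpha)*r10 + alpha*(1/2 + 1/2*(w2/E2 - w1/E1)))).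
  { unfold route_ratio2, w1, w2, E1, E2. replace r20 with (1 - r10) by lra. field. lra. }
  rewrite RR1, RR2. rewrite RR1 in W1. rewrite RR2 in W2.
  assert (Hr20 : r20 = 1 - r10) by lra.
  assert (Hk1 : 0 < k_eff alpha F1 E2) by (unfold k_eff; apply Rmult_lt_0_compat; [apply Rmult_lt_0_compat; [apply Rmult_lt_0_compat|]|]; lra).
  assert (Hk2 : 0 < k_eff alpha F2 E1) by (unfold k_eff; apply Rmult_lt_0_compat; [apply Rmult_lt_0_compat; [apply Rmult_lt_0_compat|]|]; lra).
  pose proof (ft_iff alpha (q_eff alpha F1 r10 E1 E2) (k_eff alpha F1 E2) phi ltac:(lra) Hk1 hphi) as I1.
  pose proof (ft_iff alpha (q_eff alpha F2 r20 E2 E1) (k_eff alpha F2 E1) phi ltac:(lra) Hk2 hphi) as I2.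
  fold Ft1 in I1. fold Ft2 in I2. rewrite Hr20 in I2.
  pose proof (core alpha r10 phi F1 F2 E1 E2 w1 w2 ltac:(lra) hphi hF1 hF2 HE1 HE2 hcap W1 W2)
    as [C1' [C2' C3']].
  cbv zeta in C1', C2', C3'.
  split; [|split].
  - intros H. apply C1'.
    + apply I1. pose proof (Rmin_l Ft1 Ft2). lra.
    + apply I2. pose proof (Rmin_r Ft1 Ft2). lra.
  - intros H H'. apply C2'.
    destruct (Rlt_dec 0 (4 * alpha * (alpha * phi ^ 2 - q_eff alpha F1 r10 E1 E2 * phi) - k_eff alpha F1 E2)); [lra|].
    exfalso. assert (phi <= Ft1) by (apply I1; lra). lra.
  - intros H H'. apply C3'.
    destruct (Rlt_dec 0 (4 * alpha * (alpha * phi ^ 2 - q_eff alpha F2 (1 - r10) E2 E1 * phi) - k_eff alpha F2 E1)); [lra|].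
    exfalso. assert (phi <= Ft2) by (apply I2; lra). lra.
Qed.
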